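(* Let $W$ be an $n\times n$ matrix with $\pm1$ entries. Assume that there exists a sequence $0\le j(1),\ldots,j(n)\le n$ such that $W_{ij}=-1$ if $j\le j(i)$ and $W_{ij}=1$ if $j>j(i)$. Then $W$ is $O(\log(n))$-decomposable.
   Context: For an $n\times m$ matrix $W$, $\mathrm{sym}(W)=\begin{bmatrix}0 & W\\ W^T & 0\end{bmatrix}$; $W$ is $\beta$-decomposable if there exist positive semi-definite matrices $P,N$ with $\mathrm{sym}(W)=P-N$ and $P_{ii},N_{ii}\le\beta$ for all $i$. This generalizes the known fact (Hazan, Kale, Shalev-Shwartz) that the $n\times n$ matrix with $1$ on and above the diagonal and $-1$ below it is $O(\log n)$-decomposable. *)

(* Defs.v *)
From HB Require Import structures.
From mathcomp Require Import all_boot all_order all_algebra.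
From mathcomp Require Import all_classical all_reals exp.
Set Implicit Arguments. Unset Strict Implicit. Unset Printing Implicit Defensive.
Import Order.TTheory GRing.Theory Num.Theory.
Local Open Scope ring_scope.

Definition psd (R : realType) (k : nat) (A : 'M[R]_k) : Prop :=
  A^T = A /\ forall x : 'cV[R]_k, 0 <= (x^T *m A *m x) 0 0.

Definition symmx (R : realType) (n m : nat) (W : 'M[R]_(n, m)) : 'M[R]_(n + m) :=
  block_mx 0 W W^T 0.

Definition decomposable (R : realType) (n m : nat) (W : 'M[R]_(n, m)) (beta : R) : Prop :=
  exists P N : 'M[R]_(n + m),
    [/\ psd P, psd N, symmx W = P - N &
        forall i, P i i <= beta /\ N i i <= beta].

(* Main.v *)
Require Import Defs.
From HB Require Import structures.
From mathcomp Require Import all_boot all_order all_algebra.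
From mathcomp Require Import all_classical all_reals exp.
From mathcomp Require Import ring lra zify.
Import Order.TTheory GRing.Theory Num.Theory.
Local Open Scope ring_scope.

Section Gen.
Variable R : realType.

Lemma outerE k (x : 'cV[R]_k) i j : (x *m x^T) i j = x i 0 * x j 0.
Proof. by rewrite mxE big_ord1 mxE. Qed.

Lemma gramE (S : finType) k (x : S -> 'cV[R]_k) (c : R) i j :
  (c *: \sum_s x s *m (x s)^T) i j = c * \sum_s x s i 0 * x s j 0.
Proof. by rewrite mxE summxE; under eq_bigr do rewrite outerE. Qed.

Lemma psd_gram (S : finType) k (x : S -> 'cV[R]_k) (c : R) : 0 <= c ->
  psd (c *: \sum_s x s *m (x s)^T).
Proof.
move=> c0; split.
  rewrite linearZ /= raddf_sum /=; congr (_ *: _); apply: eq_bigr => s _.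
  by rewrite trmx_mul trmxK.
move=> z; rewrite -scalemxAr -scalemxAl mxE mulr_ge0 //.
rewrite mulmx_sumr mulmx_suml summxE sumr_ge0 // => s _.
have -> : z^T *m (x s *m (x s)^T) *m z = (z^T *m x s) *m (z^T *m x s)^T.
  by rewrite trmx_mul trmxK !mulmxA.
rewrite mxE big_ord1 [_^T 0 0]mxE; by rewrite -expr2 sqr_ge0.
Qed.

Lemma psdD k (A B : 'M[R]_k) : psd A -> psd B -> psd (A + B).
Proof.
move=> [tA qA] [tB qB]; split; first by rewrite linearD /= tA tB.
by move=> z; rewrite mulmxDr mulmxDl mxE addr_ge0.
Qed.

Lemma decompD n m (A B : 'M[R]_(n, m)) a b :
  decomposable A a -> decomposable B b -> decomposable (A + B) (a + b).
Proof.
move=> [P1 [N1 [p1 n1 e1 d1]]] [P2 [N2 [p2 n2 e2 d2]]].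
exists (P1 + P2), (N1 + N2); split; try exact: psdD.
  by rewrite opprD addrACA -e1 -e2 /symmx add_block_mx !addr0 linearD.
move=> i; have [? ?] := d1 i; have [? ?] := d2 i.
by rewrite !mxE; split; apply: lerD.
Qed.

Lemma decomp_le n m (A : 'M[R]_(n, m)) a b : a <= b ->
  decomposable A a -> decomposable A b.
Proof.
move=> ab [P [N [p1 n1 e1 d1]]]; exists P, N; split => // i.
by have [? ?] := d1 i; split; apply: le_trans ab.
Qed.

Lemma decomp_sum (S : finType) n m (u : S -> 'cV[R]_n) (v : S -> 'cV[R]_m) beta :
  (forall i, 2^-1 * \sum_s (u s i 0)^+2 <= beta) ->
  (forall j, 2^-1 * \sum_s (v s j 0)^+2 <= beta) ->
  decomposable (\sum_s u s *m (v s)^T) beta.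
Proof.
move=> hu hv.
pose x s := col_mx (u s) (v s); pose y s := col_mx (u s) (- v s).
exists (2^-1 *: \sum_s x s *m (x s)^T), (2^-1 *: \sum_s y s *m (y s)^T).
split; try (apply: psd_gram; by rewrite invr_ge0 ler0n).
  apply/matrixP => i j; rewrite [RHS]mxE [X in _ = _ + X]mxE !gramE.
  rewrite /x /y /symmx.
  have uv s a b : (u s *m (v s)^T) a b = u s a 0 * v s b 0.
    by rewrite mxE big_ord1 mxE.
  case: (split_ordP i) => i' ->; case: (split_ordP j) => j' ->.
  - rewrite block_mxEul mxE -mulrBr -sumrB big1 ?mulr0 // => s _.
    by rewrite !col_mxEu subrr.
  - rewrite block_mxEur summxE -mulrBr -sumrB mulr_sumr; apply: eq_bigr => s _.
    rewrite !col_mxEu !col_mxEd uv mxE; by field.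
  - rewrite block_mxEdl mxE summxE -mulrBr -sumrB mulr_sumr; apply: eq_bigr => s _.
    rewrite !col_mxEu !col_mxEd uv mxE; by field.
  - rewrite block_mxEdr mxE -mulrBr -sumrB big1 ?mulr0 // => s _.
    by rewrite !col_mxEd !mxE mulrNN subrr.
move=> i; rewrite !gramE /x /y.
case: (split_ordP i) => i' ->.
  by split; rewrite (eq_bigr (fun s => u s i' 0 ^+ 2)) ?hu // => s _;
    rewrite col_mxEu expr2.
by split; rewrite (eq_bigr (fun s => v s i' 0 ^+ 2)) ?hv // => s _;
  rewrite col_mxEd ?mxE ?mulrNN expr2.
Qed.
End Gen.
Local Open Scope nat_scope.
Lemma lvl_id K t k : t < 2^K ->
  \sum_(l < K) (odd (t %/ 2^l) && ((k %/ 2^l).+1 == t %/ 2^l)) = (k < t).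
Proof.
elim: K t k => [|K IH] t k ht.
  by rewrite big_ord0; move: ht; rewrite expn0; case: t.
rewrite big_ord_recl /= expn0 !divn1.
under eq_bigr do rewrite /bump /= add1n expnS !divnMA.
rewrite IH; last first.
  by move: ht; rewrite expnS; set q := 2^K; lia.
have -> : odd t = (t %% 2 == 1) by rewrite modn2; case: odd.
have := divn_eq t 2; have := divn_eq k 2.
have := ltn_pmod t (isT : 0 < 2); have := ltn_pmod k (isT : 0 < 2).
case: ltngtP; case: ltngtP; case: eqP; case: eqP => /=; lia.
Qed.

Lemma sum_pick N c (X : bool) :
  \sum_(b < N) ((b == c :> nat) && X) = (c < N) && X.
Proof.
case: X; last by rewrite andbF big1 // => b _; rewrite andbF.
rewrite andbT; under eq_bigr do rewrite andbT.
elim: N => [|N IH]; first by rewrite big_ord0.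
rewrite big_ord_recr /= IH; case: ltngtP; case: ltngtP => //=; lia.
Qed.

Lemma sum_half N c d : c./2 < N ->
  \sum_(b < N) ((c == b.*2.+1) && (d == b.*2)) = odd c && (d.+1 == c).
Proof.
move=> hc; transitivity (\sum_(b<N) ((b == c./2 :> nat) && (odd c && (d.+1 == c)))); last by rewrite sum_pick hc.
apply: eq_bigr => b _.
have := odd_double_half c; move: (c./2) (odd c) => h o <-.
case: o => /=; rewrite ?add1n ?add0n ?andbF //.
  by case: eqP; case: eqP; case: eqP; case: eqP => //=; lia.
by case: eqP => //=; lia.
Qed.

Lemma sum_half_row N c : c./2 < N -> \sum_(b < N) (c == b.*2.+1) <= 1.
Proof.
move=> hc; rewrite (eq_bigr (fun b : 'I_N => ((b == c./2 :> nat) && odd c) : nat)).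
  by rewrite sum_pick; case: (_ && _).
move=> b _; have := odd_double_half c; move: (c./2) (odd c) => h o <-.
case: o => /=; rewrite ?add1n ?add0n ?andbF ?andbT;
  by do ?case: eqP => //= *; lia.
Qed.

Lemma sum_half_col N c : c./2 < N -> \sum_(b < N) (c == b.*2) <= 1.
Proof.
move=> hc; rewrite (eq_bigr (fun b : 'I_N => ((b == c./2 :> nat) && ~~ odd c) : nat)).
  by rewrite sum_pick; case: (_ && _).
move=> b _; have := odd_double_half c; move: (c./2) (odd c) => h o <-.
case: o => /=; rewrite ?add1n ?add0n ?andbF ?andbT;
  by do ?case: eqP => //= *; lia.
Qed.

Local Open Scope ring_scope.

Lemma log_bound (R : realType) (n : nat) : (2 <= n)%N ->
  2^-1 + ((2 * (trunc_log 2 n).+1)%N)%:R <= 5 / ln (2:R) * ln (n%:R : R).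
Proof.
move=> hn; set L := trunc_log 2 n.
have a0 : 0 < ln (2:R) by apply: ln_gt0; lra.
have hL : (2 ^ L <= n)%N by apply: trunc_logP => //; lia.
have h1 : (L%:R : R) <= ln (n%:R : R) / ln 2.
  rewrite ler_pdivlMr // mulr_natl -lnXn; last lra.
  rewrite ler_ln ?posrE; last 2 first.
  - by apply: exprn_gt0; lra.
  - by rewrite ltr0n; lia.
  by rewrite -natrX ler_nat.
have h2 : 1 <= ln (n%:R : R) / ln 2.
  rewrite ler_pdivlMr // mul1r ler_ln ?posrE ?ltr0n ?ler_nat //; lia.
rewrite mulrAC -mulrA; move: h1 h2; set z := _ / _ => h1 h2.
have -> : (((2 * L.+1)%N)%:R : R) = 2 * L%:R + 2 by rewrite natrM -addn1 natrD; ring.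
lra.
Qed.

Theorem proposition4 (R : realType) :
  exists C : R, 0 < C /\
  forall (n : nat) (W : 'M[R]_n), (2 <= n)%N ->
    (forall i k, W i k = 1 \/ W i k = -1) ->
    (exists jf : 'I_n -> nat,
        (forall i, (jf i <= n)%N) /\
        (forall i k : 'I_n, W i k = if (k.+1 <= jf i)%N then -1 else 1)) ->
    decomposable W (C * ln (n%:R)).
Proof.
exists (5 / ln 2); split.
  by apply: divr_gt0; [lra | apply: ln_gt0; lra].
move=> n W hn _ [jf [hjf hW]].
set K := (trunc_log 2 n).+1.
have hK : (n < 2^K)%N by apply: trunc_log_ltn.
pose u (s : 'I_K * 'I_n.+1) : 'cV[R]_n :=
  \col_i ((jf i %/ 2^s.1 == (s.2 : nat).*2.+1)%N%:R).
pose v (s : 'I_K * 'I_n.+1) : 'cV[R]_n :=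
  \col_k (- 2 * ((k : nat) %/ 2^s.1 == (s.2 : nat).*2)%N%:R).
pose one : 'I_1 -> 'cV[R]_n := fun _ => const_mx 1.
have pairE (F : 'I_K * 'I_n.+1 -> nat) :
    (\sum_s F s = \sum_(l < K) \sum_(b < n.+1) F (l, b))%N.
  by rewrite pair_bigA; apply: eq_bigr => -[].
have half_lt (c : nat) : (c <= n)%N -> (c./2 < n.+1)%N.
  by move=> hc; rewrite -divn2; have := leq_div c 2; lia.
have eW : W = \sum_(s : 'I_1) one s *m (one s)^T + \sum_s u s *m (v s)^T.
  apply/matrixP => i k; rewrite hW mxE !summxE big_ord1.
  rewrite !mxE big_ord1 !mxE.
  have -> : \sum_s (u s *m (v s)^T) i k =
      -2 * (\sum_(s : 'I_K * 'I_n.+1) ((jf i %/ 2^s.1 == (s.2 : nat).*2.+1) &&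
                    ((k : nat) %/ 2^s.1 == (s.2 : nat).*2)) : nat)%N%:R.
    rewrite natr_sum mulr_sumr; apply: eq_bigr => s _.
    rewrite !mxE big_ord1 !mxE mulrCA -natrM mulnb.
    done.
  rewrite pairE /=.
  rewrite (eq_bigr (fun l : 'I_K => (odd (jf i %/ 2^l) &&
              (((k : nat) %/ 2^l).+1 == jf i %/ 2^l))%N : nat)); last first.
    move=> l _; apply: sum_half; apply: half_lt.
    exact: leq_trans (leq_div _ _) (hjf i).
  rewrite lvl_id; last by apply: leq_ltn_trans (hjf i) hK.
  by case: (k < jf i)%N => /=; rewrite ?mulr1 ?mulr0; lra.
rewrite eW; apply: (@decomp_le _ _ _ _ _ _ (log_bound R n hn)).
apply: decompD; apply: decomp_sum.
- by move=> i; rewrite big_ord1 mxE expr1n mulr1.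
- by move=> i; rewrite big_ord1 mxE expr1n mulr1.
- move=> i.
  have -> : \sum_s (u s i 0)^+2 =
      (\sum_(s : 'I_K * 'I_n.+1) (jf i %/ 2^s.1 == (s.2 : nat).*2.+1) : nat)%N%:R.
    rewrite natr_sum; apply: eq_bigr => s _; rewrite mxE.
    by case: (_ == _); rewrite ?expr1n ?expr0n.
  rewrite pairE /=.
  have : ((\sum_(l < K) \sum_(b < n.+1)
          (jf i %/ 2^l == b.*2.+1) : nat) <= K)%N.
    apply: (@leq_trans (\sum_(l < K) 1)%N); last by rewrite sum1_card card_ord.
    apply: leq_sum => l _; apply: sum_half_row; apply: half_lt.
    exact: leq_trans (leq_div _ _) (hjf i).
  rewrite -(ler_nat R) => h.
  apply: le_trans (_ : 2^-1 * (K%:R) <= _).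
    by rewrite ler_pM2l // invr_gt0; lra.
  rewrite natrM -/K; have hK0 : (0 : R) <= K%:R by [].
  lra.

- move=> j.
  have -> : \sum_s (v s j 0)^+2 =
      4 * (\sum_(s : 'I_K * 'I_n.+1) ((j : nat) %/ 2^s.1 == (s.2 : nat).*2) : nat)%N%:R.
    rewrite natr_sum mulr_sumr; apply: eq_bigr => s _; rewrite mxE.
    by case: (_ == _); rewrite /= ?mulr1 ?mulr0 ?expr0n //= sqrrN; lra.
  rewrite pairE /=.
  have : ((\sum_(l < K) \sum_(b < n.+1)
          ((j : nat) %/ 2^l == b.*2) : nat) <= K)%N.
    apply: (@leq_trans (\sum_(l < K) 1)%N); last by rewrite sum1_card card_ord.
    apply: leq_sum => l _; apply: sum_half_col; apply: half_lt.
    exact: leq_trans (leq_div _ _) (ltnW (ltn_ord j)).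
  rewrite -(ler_nat R) => h.
  rewrite natrM -/K; lra.
Qed.
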